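(* Let $\mathcal A$ be the category of all topological abelian groups and $\mathcal A_2$ the category of all Hausdorff topological abelian groups. Every subcategory $\mathcal B$ of $\mathcal A$ that is an $\mathcal{SC}$-variety has a unique tensor product, and every subcategory $\mathcal B_2$ of $\mathcal A_2$ that is an $\overline{\mathcal{SC}}$-variety has a unique tensor product.
   Context: A non-empty class of topological groups is an $\mathcal{SC}$-variety (resp. $\overline{\mathcal{SC}}$-variety) if it is closed under taking arbitrary subgroups (resp. closed subgroups) and topological products. A continuous bihomomorphism $b:G\times H\to A$ is separately a continuous homomorphism in each variable and continuous at $(0,0)$. For $G,H$ in a subcategory $\mathcal B$, a $\mathcal B$-tensor product is a pair $(T,\otimes_{\mathcal B})$ with $T\in\mathcal B$ and $\otimes_{\mathcal B}:G\times H\to T$ a continuous bihomomorphism such that every continuous bihomomorphism $b:G\times H\to B$, $B\in\mathcal B$, factors as $b=\tilde b\circ\otimes_{\mathcal B}$ for a continuous homomorphism $\tilde b:T\to B$. ''Has a unique tensor product'' means: for all $G,H\in\mathcal B$ a $\mathcal B$-tensor product exists whose map $\otimes_{\mathcal B}$ is an epi-bihomomorphism (any two homomorphisms $h_1,h_2$ on $T$ with $h_1\circ\otimes_{\mathcal B}=h_2\circ\otimes_{\mathcal B}$ coincide), and such a tensor product is unique up to topological isomorphism. *)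

(* Defs.v *)
(* Topological abelian groups are the library's
   [topologicalZmodType] (tvs.v): a Zmodule with a topology for which
   addition and opposite are continuous. *)
From HB Require Import structures.
From mathcomp Require Import all_boot all_order all_algebra.
From mathcomp Require Import all_classical all_reals all_analysis.
Set Implicit Arguments. Unset Strict Implicit. Unset Printing Implicit Defensive.
Import Order.TTheory GRing.Theory Num.Theory.
Local Open Scope classical_set_scope.
Local Open Scope ring_scope.

Definition tgclass := topologicalZmodType -> Prop.

Definition cont_hom (G H : topologicalZmodType) (f : G -> H) : Prop :=
  (forall x y : G, f (x - y) = f x - f y) /\ continuous f.

Definition tembedding (H G : topologicalZmodType) (f : H -> G) : Prop :=
  [/\ cont_hom f, injective f &
      forall U : set H, open U -> exists V : set G, open V /\ U = f @^-1` V].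

(* (P, p) is a topological product of the family F: P is algebraically the
   product (via the projections p i) and carries the product (initial)
   topology. *)
Definition is_tproduct (I : Type) (F : I -> topologicalZmodType)
    (P : topologicalZmodType) (p : forall i, P -> F i) : Prop :=
  [/\ forall i, cont_hom (p i),
      forall x : (forall i, F i), exists! y : P, forall i, p i y = x i &
      forall (X : topologicalType) (f : X -> P),
        continuous f <-> forall i, continuous (p i \o f)].

(* closed under taking subgroups (up to topological isomorphism) *)
Definition subgroup_closed (B : tgclass) : Prop :=
  forall (G H : topologicalZmodType) (f : H -> G), B G -> tembedding f -> B H.

(* closed under taking closed subgroups (up to topological isomorphism) *)
Definition closed_subgroup_closed (B : tgclass) : Prop :=
  forall (G H : topologicalZmodType) (f : H -> G),
    B G -> tembedding f -> closed (range f) -> B H.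

Definition product_closed (B : tgclass) : Prop :=
  forall (I : Type) (F : I -> topologicalZmodType) (P : topologicalZmodType)
    (p : forall i, P -> F i), (forall i, B (F i)) -> is_tproduct p -> B P.

Definition SC_variety (B : tgclass) : Prop :=
  [/\ exists G, B G, subgroup_closed B & product_closed B].

Definition SCbar_variety_H (B : tgclass) : Prop :=
  [/\ forall G, B G -> hausdorff_space G,
      exists G, B G, closed_subgroup_closed B & product_closed B].

Definition cont_bihom (G H A : topologicalZmodType) (b : G -> H -> A) : Prop :=
  [/\ forall x : G, cont_hom (b x),
      forall y : H, cont_hom (fun x => b x y) &
      continuous_at ((0 : G), (0 : H)) (fun z : G * H => b z.1 z.2)].

Definition is_tensor (B : tgclass) (G H T : topologicalZmodType)
    (t : G -> H -> T) : Prop :=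
  [/\ B T, cont_bihom t &
      forall (A : topologicalZmodType) (b : G -> H -> A), B A -> cont_bihom b ->
        exists bt : T -> A, cont_hom bt /\ forall x y, b x y = bt (t x y)].

Definition epi_bihom (B : tgclass) (G H T : topologicalZmodType)
    (t : G -> H -> T) : Prop :=
  forall (A : topologicalZmodType) (h1 h2 : T -> A), B A ->
    cont_hom h1 -> cont_hom h2 -> (forall x y, h1 (t x y) = h2 (t x y)) ->
    forall z, h1 z = h2 z.

Definition topiso (T T' : topologicalZmodType) (phi : T -> T') : Prop :=
  cont_hom phi /\
  exists psi : T' -> T, [/\ cancel phi psi, cancel psi phi & continuous psi].

Definition has_unique_tensor (B : tgclass) : Prop :=
  forall G H : topologicalZmodType, B G -> B H ->
    (exists (T : topologicalZmodType) (t : G -> H -> T),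
        is_tensor B t /\ epi_bihom B t) /\
    (forall (T T' : topologicalZmodType) (t : G -> H -> T) (t' : G -> H -> T'),
        is_tensor B t -> epi_bihom B t -> is_tensor B t' -> epi_bihom B t' ->
        exists phi : T -> T', topiso phi /\ forall x y, phi (t x y) = t' x y).

(* Main.v *)
Require Import Defs.
From HB Require Import structures.
From mathcomp Require Import all_boot all_order all_algebra.
From mathcomp Require Import all_classical all_reals all_analysis.
Set Implicit Arguments. Unset Strict Implicit. Unset Printing Implicit Defensive.
Import Order.TTheory GRing.Theory Num.Theory.
Local Open Scope classical_set_scope.
Local Open Scope ring_scope.

Section ITopBase.
Variables (Y : choiceType) (J : Type) (T : J -> topologicalType) (f : forall j, Y -> T j).
Definition itopT : Type := Y.
Let W := sup_topology (fun j => Topological.class (initial_topology (f j))).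

Lemma initial_cvgP j (F : set_system Y) (y : Y) : Filter F ->
  (F --> (y : initial_topology (f j))) <-> (f j @ F --> f j y).
Proof.
move=> FF; split.
  move=> Fy; apply: cvg_trans (@initial_continuous _ _ (f j) y).
  exact: (cvg_app (f j : initial_topology (f j) -> T j)).
move=> fF A; rewrite /= nbhsE => -[B [[V oV <-] By] BA].
apply: (filterS BA); apply: fF; exact: open_nbhs_nbhs.
Qed.

Lemma sup_initial_cvgP (F : set_system Y) (y : Y) : Filter F ->
  (F --> (y : W)) <-> (forall j, f j @ F --> f j y).
Proof.
move=> FF; split.
  move=> /(cvg_sup (fun j => Topological.class (initial_topology (f j))) y FF) h j.
  by have := (proj1 (initial_cvgP j y FF)); apply; exact: h.
move=> h; apply/(cvg_sup (fun j => Topological.class (initial_topology (f j))) y FF) => j.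
by have := (proj2 (initial_cvgP j y FF)); apply.
Qed.
End ITopBase.

Definition itop (Y : zmodType) (J : Type) (T : J -> topologicalZmodType) (f : forall j, Y -> T j)
  (hf : forall j x y, f j (x - y) = f j x - f j y) : Type := Y.

Section ITop.
Variables (Y : zmodType) (J : Type) (T : J -> topologicalZmodType) (f : forall j, Y -> T j)
  (hf : forall j x y, f j (x - y) = f j x - f j y).
Local Notation W := (itop hf).

HB.instance Definition _ := GRing.Zmodule.on W.
HB.instance Definition _ := Topological.copy W
  (sup_topology (fun j => Topological.class (initial_topology (f j)))).

Lemma itop_cvgP (F : set_system W) (y : W) : Filter F ->
  (F --> y) <-> (forall j, f j @ F --> f j y).
Proof. exact: (@sup_initial_cvgP Y J T f F y). Qed.

Lemma itop_contP (X : topologicalType) (g : X -> W) (x : X) :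
  {for x, continuous g} <-> (forall j, {for x, continuous (f j \o g)}).
Proof.
have FF : Filter (g @ x) by apply: fmap_filter.
exact: (itop_cvgP (g x) FF).
Qed.

Lemma itop_proj_cont j : continuous (f j : W -> T j).
Proof. by move=> x; have := (proj1 (itop_contP (@id W) x)); apply => //. Qed.

Let sub_cont : continuous (fun x : W * W => x.1 - x.2).
Proof.
move=> x; apply/itop_contP => j.
have -> : (f j \o (fun x : W * W => x.1 - x.2)) = (fun z => (f j z.1) - (f j z.2)).
  by apply: funext => z /=; rewrite hf.
apply: (@continuous_comp _ _ _ (fun z : W * W => (f j z.1, f j z.2)) (fun z : T j * T j => z.1 - z.2)).
  apply: cvg_pair.
    apply: (@continuous_comp _ _ _ fst (f j : W -> T j)); [exact: cvg_fst | exact: itop_proj_cont].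
  apply: (@continuous_comp _ _ _ snd (f j : W -> T j)); [exact: cvg_snd | exact: itop_proj_cont].
exact: sub_continuous.
Qed.

HB.instance Definition _ := PreTopologicalNmodule_isTopologicalZmodule.Build W sub_cont.
End ITop.

Definition pbhyp (Y : Type) (M : zmodType) (f : Y -> M) :=
  injective f /\ (range f 0 /\ forall a b, range f a -> range f b -> range f (a - b)).
Definition pbz (Y : Type) (M : zmodType) (f : Y -> M) (h : pbhyp f) : Type := Y.

Section PB.
Variables (Y : Type) (M : zmodType) (f : Y -> M) (h : pbhyp f).
Let finj : injective f := proj1 h.
Let r0 : range f 0 := proj1 (proj2 h).
Let rB : forall a b, range f a -> range f b -> range f (a - b) := proj2 (proj2 h).
Let rN a : range f a -> range f (- a).
Proof. by move=> ra; rewrite -sub0r; apply: rB. Qed.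
Let rD a b : range f a -> range f b -> range f (a + b).
Proof. by move=> ra rb; rewrite -[b]opprK; apply: rB => //; apply: rN. Qed.
Let y0 : Y := projT1 (cid2 r0).
Definition pinv (m : M) : Y :=
  match pselect (range f m) with left r => projT1 (cid2 r) | right _ => y0 end.
Lemma pinvK m : range f m -> f (pinv m) = m.
Proof.
rewrite /pinv; case: pselect => // r _.
by case: (cid2 r) => /= y _ ->.
Qed.
Let rf y : range f (f y). Proof. by exists y. Qed.
Let zero : Y := pinv 0.
Let add (a b : Y) : Y := pinv (f a + f b).
Let opp (a : Y) : Y := pinv (- f a).
Let fzero : f zero = 0. Proof. exact: pinvK. Qed.
Let fadd a b : f (add a b) = f a + f b. Proof. by apply: pinvK; apply: rD. Qed.
Let fopp a : f (opp a) = - f a. Proof. by apply: pinvK; apply: rN. Qed.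
Let addA : associative add.
Proof. by move=> a b c; apply: finj; rewrite !fadd addrA. Qed.
Let addC : commutative add.
Proof. by move=> a b; apply: finj; rewrite !fadd addrC. Qed.
Let add0 : left_id zero add.
Proof. by move=> a; apply: finj; rewrite !fadd fzero add0r. Qed.
Let addN : left_inverse zero opp add.
Proof. by move=> a; apply: finj; rewrite !fadd fopp fzero addNr. Qed.

HB.instance Definition _ := gen_eqMixin (pbz h).
HB.instance Definition _ := gen_choiceMixin (pbz h).
HB.instance Definition _ := GRing.isZmodule.Build (pbz h) addA addC add0 addN.

Lemma pbz_hom (x y : pbz h) : f (x - y) = f x - f y.
Proof. by rewrite /GRing.add /= fadd fopp. Qed.
Lemma pbz_range : range f = range f. Proof. by []. Qed.
End PB.

Section ITop1.
Variables (Y : zmodType) (M : topologicalZmodType) (f : unit -> Y -> M)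
  (hf : forall j x y, f j (x - y) = f j x - f j y).
Local Notation W := (itop hf).

Lemma itop1_nbhs (y : W) (U : set W) : nbhs y U ->
  exists V, nbhs (f tt y) V /\ f tt @^-1` V `<=` U.
Proof.
pose Fu : set_system W := [set U' : set W | exists V, nbhs (f tt y) V /\ f tt @^-1` V `<=` U'].
have FF : Filter Fu.
  split.
  - by exists setT; split => //; exact: filterT.
  - move=> P Q [V1 [n1 s1]] [V2 [n2 s2]]; exists (V1 `&` V2); split; first exact: filterI.
    by move=> z [/s1 ? /s2 ?].
  - by move=> P Q PQ [V [n s]]; exists V; split => //; apply: subset_trans PQ.
have : Fu --> y.
  apply/(@itop_cvgP _ _ _ _ hf Fu y FF) => -[] V nV.
  by exists V; split.
by move=> /(_ U); apply.
Qed.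

Lemma itop1_open (U : set W) : open U -> exists V, open V /\ U = f tt @^-1` V.
Proof.
move=> oU.
exists (\bigcup_(Ob in [set Ob : set M | open Ob /\ f tt @^-1` Ob `<=` U]) Ob); split.
  by apply: bigcup_open => Ob [].
apply/seteqP; split.
  move=> u Uu.
  have /itop1_nbhs [V [nV sV]] : nbhs u U.
    by move: oU; rewrite openE; apply.
  rewrite /= in nV.
  move: nV; rewrite nbhsE; move=> [Ob [oO Ou] OV].
  exists Ob => //; split => //; apply: subset_trans sV.
  by move=> z /= /OV.
by move=> u [Ob [_ sO] Ou]; exact: sO.
Qed.
End ITop1.

Definition dprodz (I : Type) (F : I -> topologicalZmodType) : Type := forall i, F i.
Section DProd.
Variables (I : Type) (F : I -> topologicalZmodType).
Local Notation D := (dprodz F).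
Let zero : D := fun i => 0.
Let add (a b : D) : D := fun i => a i + b i.
Let opp (a : D) : D := fun i => - a i.
Let addA : associative add.
Proof. by move=> a b c; apply: functional_extensionality_dep => i; rewrite /add addrA. Qed.
Let addC : commutative add.
Proof. by move=> a b; apply: functional_extensionality_dep => i; rewrite /add addrC. Qed.
Let add0 : left_id zero add.
Proof. by move=> a; apply: functional_extensionality_dep => i; rewrite /add add0r. Qed.
Let addN : left_inverse zero opp add.
Proof. by move=> a; apply: functional_extensionality_dep => i; rewrite /add addNr. Qed.
HB.instance Definition _ := gen_eqMixin D.
HB.instance Definition _ := gen_choiceMixin D.
HB.instance Definition _ := GRing.isZmodule.Build D addA addC add0 addN.
Lemma dprodz_hom i (x y : D) : (x - y) i = x i - y i.
Proof. by []. Qed.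
End DProd.

Section Hom.
Variables (M N : zmodType) (h : M -> N) (hh : forall x y, h (x - y) = h x - h y).
Lemma hom0 : h 0 = 0. Proof. by rewrite -(subrr 0) hh subrr. Qed.
Lemma homN x : h (- x) = - h x. Proof. by rewrite -sub0r hh hom0 sub0r. Qed.
Lemma homD x y : h (x + y) = h x + h y.
Proof. have := hh x (- y); rewrite opprK => ->; by rewrite homN opprK. Qed.
End Hom.

Definition sgn (M : zmodType) (beta : bool) (a : M) := if beta then - a else a.
Definition phi (G H : Type) (M : zmodType) (b : G -> H -> M) (s : seq (bool * G * H)) : M :=
  foldr (fun p acc => sgn p.1.1 (b p.1.2 p.2) + acc) 0 s.
Definition span (G H : Type) (M : zmodType) (b : G -> H -> M) : set M := range (phi b).
Definition flipb (G H : Type) (p : bool * G * H) := (~~ p.1.1, p.1.2, p.2).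

Section Phi.
Variables (G H : Type) (M : zmodType) (b : G -> H -> M).
Lemma phi_cat s1 s2 : phi b (s1 ++ s2) = phi b s1 + phi b s2.
Proof. by elim: s1 => [|p s1 IH] /=; rewrite ?add0r // IH addrA. Qed.
Lemma phi_flip s : phi b (map (@flipb G H) s) = - phi b s.
Proof.
elim: s => [|p s IH] /=; first by rewrite oppr0.
by rewrite IH opprD; case: p => [[[] x] y] //=; rewrite opprK.
Qed.
Lemma span0 : span b 0. Proof. by exists [::]. Qed.
Lemma spanB a c : span b a -> span b c -> span b (a - c).
Proof.
by move=> [s1 _ <-] [s2 _ <-]; exists (s1 ++ map (@flipb G H) s2) => //; rewrite phi_cat phi_flip.
Qed.
Lemma span_gen x y : span b (b x y).
Proof. by exists [:: (false, x, y)] => //=; rewrite addr0. Qed.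
Lemma phi_hom (N : zmodType) (h : M -> N) (hh : forall x y, h (x - y) = h x - h y) s :
  h (phi b s) = phi (fun x y => h (b x y)) s.
Proof.
elim: s => [|p s IH] /=; first exact: hom0.
by rewrite (homD hh) IH; case: p => [[[] x] y] //=; rewrite (homN hh).
Qed.
End Phi.

Lemma cont_hom_comp (X Y Z : topologicalZmodType) (f : X -> Y) (g : Y -> Z) :
  cont_hom f -> cont_hom g -> cont_hom (g \o f).
Proof.
move=> [hf cf] [hg cg]; split; first by move=> x y /=; rewrite hf hg.
by move=> x; apply: continuous_comp; [exact: cf | exact: cg].
Qed.

Lemma sig_inj (X : Type) (S : set X) : injective (@proj1_sig X S).
Proof. by move=> [a ha] [c hc] /= e; subst c; congr exist; exact: Prop_irrelevance. Qed.

Section Tensor.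
Variables (B : tgclass) (G H : topologicalZmodType) (C : Type).

Record idx := Idx {
  isub : set C;
  icls : TopologicalZmodule.axioms_ {x : C | isub x};
  it : G -> H -> TopologicalZmodule.Pack icls;
  iprop : B (TopologicalZmodule.Pack icls) /\ cont_bihom it }.

Definition Fi (i : idx) : topologicalZmodType := TopologicalZmodule.Pack (icls i).
Definition prj (i : idx) (p : dprodz Fi) : Fi i := p i.
Lemma prj_hom i (x y : dprodz Fi) : prj i (x - y) = prj i x - prj i y.
Proof. by []. Qed.
Definition P : topologicalZmodType := itop prj_hom.

Lemma P_prod : is_tproduct (fun i => prj i : P -> Fi i).
Proof.
split.
- move=> i; split; first exact: prj_hom.
  exact: (@itop_proj_cont _ _ _ _ prj_hom i).
- move=> x; exists (x : P); split => // y hy.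
  by apply: functional_extensionality_dep => i; rewrite -hy.
- move=> X f; split.
    by move=> cf i x; have := proj1 (itop_contP f x) (cf x); apply.
  by move=> h x; apply/itop_contP => i; exact: h.
Qed.

Lemma BP : product_closed B -> B P.
Proof. by move=> pc; apply: (pc idx Fi P _ (fun i => proj1 (iprop i)) P_prod). Qed.

Lemma Peq (p q : P) : (forall i, prj i p = prj i q) -> p = q.
Proof. exact: functional_extensionality_dep. Qed.

Definition t0 (x : G) (y : H) : P := fun i => it i x y.

Lemma t0_cont_bihom : cont_bihom t0.
Proof.
split.
- move=> x; split.
    move=> y1 y2; apply: Peq => i; rewrite prj_hom.
    case: (proj2 (iprop i)) => hx _ _.
    by rewrite /prj /t0 (proj1 (hx x)).
  move=> y; apply/itop_contP => i.
  case: (proj2 (iprop i)) => hx _ _; exact: (proj2 (hx x)).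
- move=> y; split.
    move=> x1 x2; apply: Peq => i; rewrite prj_hom.
    case: (proj2 (iprop i)) => _ hy _.
    by rewrite /prj /t0 (proj1 (hy y)).
  move=> x; apply/itop_contP => i.
  case: (proj2 (iprop i)) => _ hy _; exact: (proj2 (hy y)).
- apply/itop_contP => i.
  by case: (proj2 (iprop i)).
Qed.


Definition Rep (A : topologicalZmodType) (b : G -> H -> A) :=
  exists i : idx, exists iota : Fi i -> A,
    cont_hom iota /\ forall x y, iota (it i x y) = b x y.

Section TS.
Variables (S : set P) (S0 : S 0) (SB : forall a c, S a -> S c -> S (a - c))
  (St : forall x y, S (t0 x y)).

Lemma pbval : pbhyp (@proj1_sig P S).
Proof.
split; first exact: sig_inj.
split; first by exists (exist _ 0 S0).
move=> _ _ [a _ <-] [c _ <-].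
by exists (exist _ (proj1_sig a - proj1_sig c) (SB (proj2_sig a) (proj2_sig c))).
Qed.

Lemma range_val : range (@proj1_sig P S) = S.
Proof.
apply/seteqP; split; first by move=> _ [a _ <-]; exact: (proj2_sig a).
by move=> p Sp; exists (exist _ p Sp).
Qed.

Definition T : topologicalZmodType :=
  @itop (pbz pbval) unit (fun _ => P) (fun _ => @proj1_sig P S) (fun _ => @pbz_hom _ _ _ pbval).

Definition tv (z : T) : P := proj1_sig z.

Lemma tv_hom (z w : T) : tv (z - w) = tv z - tv w.
Proof. exact: (@pbz_hom _ _ _ pbval). Qed.

Lemma tv_inj : injective tv.
Proof. exact: sig_inj. Qed.

Lemma tv_temb : tembedding tv.
Proof.
split => //.
- split; first exact: tv_hom.
  exact: (@itop_proj_cont _ _ _ _ (fun _ : unit => @pbz_hom _ _ _ pbval) tt).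
- exact: tv_inj.
- move=> U oU.
  have [V [oV ->]] := @itop1_open _ _ _ (fun _ : unit => @pbz_hom _ _ _ pbval) U oU.
  by exists V.
Qed.

Lemma range_tv : range tv = S.
Proof. exact: range_val. Qed.

Definition t (x : G) (y : H) : T := exist _ (t0 x y) (St x y).

Lemma t_cont_bihom : cont_bihom t.
Proof.
have [h1 h2 h3] := t0_cont_bihom.
split.
- move=> x; split.
    by move=> y1 y2; apply: tv_inj; rewrite tv_hom /tv /= (proj1 (h1 x)).
  by move=> y; apply/itop_contP => -[]; exact: (proj2 (h1 x)).
- move=> y; split.
    by move=> x1 x2; apply: tv_inj; rewrite tv_hom /tv /= (proj1 (h2 y)).
  by move=> x; apply/itop_contP => -[]; exact: (proj2 (h2 y)).
- by apply/itop_contP => -[]; exact: h3.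
Qed.

Lemma T_univ (A : topologicalZmodType) (b : G -> H -> A) : Rep b ->
  exists bt : T -> A, cont_hom bt /\ forall x y, b x y = bt (t x y).
Proof.
move=> [i [iota [hi ib]]].
exists (iota \o prj i \o tv); split; last by move=> x y /=; rewrite -ib.
have htv : cont_hom tv by case: tv_temb.
have hp : cont_hom (prj i : P -> Fi i) by case: P_prod.
have := cont_hom_comp (cont_hom_comp htv hp) hi; exact.
Qed.

Lemma tv_phi s : tv (phi t s) = phi t0 s.
Proof. by rewrite (@phi_hom _ _ _ t _ tv tv_hom). Qed.

End TS.
End Tensor.

Section RepBuild.
Variables (B : tgclass) (G H : topologicalZmodType) (C : Type).
Variables (A : topologicalZmodType) (b : G -> H -> A) (hb : cont_bihom b).
Variables (SA : set A) (SA0 : SA 0) (SAB : forall a c, SA a -> SA c -> SA (a - c))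
  (SAb : forall x y, SA (b x y)) (e : A -> C)
  (einj : forall a c, SA a -> SA c -> e a = e c -> a = c)
  (hBF : forall (F : topologicalZmodType) (iota : F -> A),
     tembedding iota -> range iota = SA -> B F).

Let isubA : set C := e @` SA.
Let Y := {c : C | isubA c}.
Let io (y : Y) : A := projT1 (cid2 (proj2_sig y)).
Let io_spec y : SA (io y) /\ e (io y) = proj1_sig y.
Proof. by rewrite /io; case: (cid2 _) => a ha hea. Qed.

Let io_inj : injective io.
Proof.
move=> y1 y2 h; apply: sig_inj.
by rewrite -(proj2 (io_spec y1)) -(proj2 (io_spec y2)) h.
Qed.

Let range_io : range io = SA.
Proof.
apply/seteqP; split; first by move=> _ [y _ <-]; exact: (proj1 (io_spec y)).
move=> a Sa.
have ea : isubA (e a) by exists a.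
exists (exist _ (e a) ea) => //.
have [s1 s2] := io_spec (exist _ (e a) ea).
by apply: einj => //.
Qed.

Let hio : pbhyp io.
Proof.
split; first exact: io_inj.
rewrite range_io; split => //.
Qed.

Let FA : topologicalZmodType :=
  @itop (pbz hio) unit (fun _ => A) (fun _ => io) (fun _ => @pbz_hom _ _ _ hio).

Let iof (z : FA) : A := io z.

Let iof_hom (z w : FA) : iof (z - w) = iof z - iof w.
Proof. exact: (@pbz_hom _ _ _ hio). Qed.

Let iof_inj (z w : FA) : iof z = iof w -> z = w.
Proof. exact: io_inj. Qed.

Let iof_temb : tembedding iof.
Proof.
split => //.
- split; first exact: iof_hom.
  exact: (@itop_proj_cont _ _ _ _ (fun _ : unit => @pbz_hom _ _ _ hio) tt).
- move=> U oU.
  have [V [oV ->]] := @itop1_open _ _ _ (fun _ : unit => @pbz_hom _ _ _ hio) U oU.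
  by exists V.
Qed.

Let itb (x : G) (y : H) : FA := pinv hio (b x y).

Let iof_itb x y : iof (itb x y) = b x y.
Proof. by apply: pinvK; rewrite range_io. Qed.

Let itb_bihom : cont_bihom itb.
Proof.
have [h1 h2 h3] := hb.
split.
- move=> x; split.
    by move=> y1 y2; apply: iof_inj; rewrite iof_hom !iof_itb (proj1 (h1 x)).
  move=> y; apply/itop_contP => -[].
  have -> : ((fun _ : unit => io) tt \o itb x) = b x by apply: funext => z /=; exact: iof_itb.
  exact: (proj2 (h1 x)).
- move=> y; split.
    by move=> x1 x2; apply: iof_inj; rewrite iof_hom !iof_itb (proj1 (h2 y)).
  move=> x; apply/itop_contP => -[].
  have -> : ((fun _ : unit => io) tt \o (fun x => itb x y)) = (fun x => b x y).
    by apply: funext => z /=; exact: iof_itb.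
  exact: (proj2 (h2 y)).
- apply/itop_contP => -[].
  have -> : ((fun _ : unit => io) tt \o (fun z : G * H => itb z.1 z.2)) = (fun z => b z.1 z.2).
    by apply: funext => z /=; exact: iof_itb.
  exact: h3.
Qed.

Lemma rep_build : Rep B C b.
Proof.
have BF : B FA by apply: (hBF iof_temb).
exists (@Idx B G H C isubA (TopologicalZmodule.class FA) itb (conj BF itb_bihom)).
exists iof; split; last exact: iof_itb.
by case: iof_temb.
Qed.
End RepBuild.

Lemma tensor_unique (B : tgclass) (G H T T' : topologicalZmodType)
  (t : G -> H -> T) (t' : G -> H -> T') :
  is_tensor B t -> epi_bihom B t -> is_tensor B t' -> epi_bihom B t' ->
  exists phi : T -> T', topiso phi /\ forall x y, phi (t x y) = t' x y.
Proof.
move=> [BT bt ut] et [BT' bt' ut'] et'.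
have [f [hf ef]] := ut T' t' BT' bt'.
have [g [hg eg]] := ut' T t BT bt.
have idh (X : topologicalZmodType) : cont_hom (@id X).
  by split => // x; exact: cvg_id.
have gf : forall z, g (f z) = z.
  apply: (et T (g \o f) id BT (cont_hom_comp hf hg) (idh T)).
  by move=> x y /=; rewrite -ef -eg.
have fg : forall z, f (g z) = z.
  apply: (et' T' (f \o g) id BT' (cont_hom_comp hg hf) (idh T')).
  by move=> x y /=; rewrite -eg -ef.
exists f; split; last by move=> x y; rewrite ef.
split => //; exists g; split => //; exact: (proj2 hg).
Qed.

Lemma closure_sub0 (M : topologicalZmodType) (S : set M) : S 0 -> closure S 0.
Proof. by move=> S0; apply: subset_closure. Qed.

Lemma closure_subB (M : topologicalZmodType) (S : set M) :
  (forall a c, S a -> S c -> S (a - c)) ->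
  forall a c, closure S a -> closure S c -> closure S (a - c).
Proof.
move=> SB a c ca cc W nW.
have : nbhs (a, c) ((fun z : M * M => z.1 - z.2) @^-1` W).
  exact: (@sub_continuous M (a, c)).
move=> [[P Q] [/= nP nQ] sPQ].
have [a' [Sa' Pa']] := ca P nP.
have [c' [Sc' Qc']] := cc Q nQ.
exists (a' - c'); split; first exact: SB.
by apply: (sPQ (a', c')).
Qed.

Lemma part1 (B : tgclass) : SC_variety B -> has_unique_tensor B.
Proof.
move=> [_ sc pc] G H BG BH; split; last by move=> T1 T2 t1 t2; exact: tensor_unique.
pose C := set (seq (bool * G * H)).
pose S : set (P B G H C) := span (@t0 B G H C).
have S0 : S 0 := span0 _.
have SB : forall a c, S a -> S c -> S (a - c) by move=> a c; exact: spanB.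
have St : forall x y, S (t0 x y) := span_gen _.
exists (T S0 SB), (t S0 SB St); split.
- split.
  + exact: (sc _ _ _ (BP G H C pc) (tv_temb S0 SB)).
  + exact: t_cont_bihom.
  + move=> A b BA hb; apply: T_univ.
    apply: (@rep_build B G H C A b hb (span b) (span0 b) (fun a c => @spanB _ _ _ b a c)
      (span_gen b) (fun a => [set s | phi b s = a])).
      move=> a c [s _ <-] _ e; have : [set s0 | phi b s0 = phi b s] s by [].
      by rewrite e.
    move=> F iota temb _; exact: (sc _ _ _ BA temb).
- move=> A h1 h2 BA hh1 hh2 eq z.
  have : S (tv z).
    exact: (proj2_sig z).
  move=> [s _ ez].
  have -> : z = phi (t S0 SB St) s.
    apply: (@sig_inj _ S); have := tv_phi S0 SB St s; rewrite /tv => ->; exact: (esym ez).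
  rewrite (@phi_hom _ _ _ (t S0 SB St) _ h1 (proj1 hh1)) (@phi_hom _ _ _ (t S0 SB St) _ h2 (proj1 hh2)).
  congr phi; apply: funext => x; apply: funext => y; exact: eq.
Qed.

Lemma part2 (B : tgclass) : SCbar_variety_H B -> has_unique_tensor B.
Proof.
move=> [hausB _ sc pc] G H BG BH; split; last by move=> T1 T2 t1 t2; exact: tensor_unique.
pose C := set (set (seq (bool * G * H))).
pose S : set (P B G H C) := closure (span (@t0 B G H C)).
have S0 : S 0 := closure_sub0 (span0 _).
have SB : forall a c, S a -> S c -> S (a - c).
  by apply: closure_subB => a c; exact: spanB.
have St : forall x y, S (t0 x y) by move=> x y; apply: subset_closure; exact: span_gen.
exists (T S0 SB), (t S0 SB St); split.
- split.
  + apply: (sc _ _ _ (BP G H C pc) (tv_temb S0 SB)).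
    by rewrite range_tv; exact: closed_closure.
  + exact: t_cont_bihom.
  + move=> A b BA hb; apply: T_univ.
    apply: (@rep_build B G H C A b hb (closure (span b)) (closure_sub0 (span0 b))
      (closure_subB (fun a c => @spanB _ _ _ b a c))
      (fun x y => subset_closure (span_gen b x y))
      (fun a => [set U | exists V, nbhs a V /\ phi b @^-1` V `<=` U])).
      move=> a c ca cc eac; apply: (hausB A BA) => U1 U2 nU1 nU2.
      have e1 := congr1 (fun X => X (phi b @^-1` U1)) eac; simpl in e1.
      have : exists V, nbhs c V /\ phi b @^-1` V `<=` phi b @^-1` U1.
        have h0 : exists V, nbhs a V /\ phi b @^-1` V `<=` phi b @^-1` U1.
          by exists U1; split.
        exact: (@eq_ind Prop _ id h0 _ e1).
      move=> [V [nV sV]].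
      have [_ [[s _ <-] [Vs U2s]]] := cc (V `&` U2) (filterI nV nU2).
      by exists (phi b s); split => //; exact: sV.
    move=> F iota temb ri; apply: (sc _ _ _ BA temb).
    by rewrite ri; exact: closed_closure.
- move=> A h1 h2 BA hh1 hh2 eq z.
  have espan : forall s, h1 (phi (t S0 SB St) s) = h2 (phi (t S0 SB St) s).
    move=> s.
    rewrite (@phi_hom _ _ _ (t S0 SB St) _ h1 (proj1 hh1)) (@phi_hom _ _ _ (t S0 SB St) _ h2 (proj1 hh2)).
    congr phi; apply: funext => x; apply: funext => y; exact: eq.
  have zcl : closure (span (t S0 SB St)) z.
    move=> W nW.
    have [V [nV sV]] := itop1_nbhs nW.
    have [_ [[s _ <-] Vs]] := (proj2_sig z : S (proj1_sig z)) V nV.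
    exists (phi (t S0 SB St) s); split; first by exists s.
    apply: sV => /=.
    have := tv_phi S0 SB St s; rewrite /tv => ->; exact: Vs.
  apply: (hausB A BA) => U1 U2 nU1 nU2.
  have n1 : nbhs z (h1 @^-1` U1) by exact: (proj2 hh1 z).
  have n2 : nbhs z (h2 @^-1` U2) by exact: (proj2 hh2 z).
  have [_ [[s _ <-] [w1 w2]]] := zcl _ (filterI n1 n2).
  exists (h1 (phi (t S0 SB St) s)); split => //.
  by rewrite espan.
Qed.

Theorem corollary2p10 :
  (forall B : tgclass, SC_variety B -> has_unique_tensor B) /\
  (forall B2 : tgclass, SCbar_variety_H B2 -> has_unique_tensor B2).
Proof. split; [exact: part1 | exact: part2]. Qed.
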